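(* Let $\lambda,\mu,\nu\in\mathbb{R}$, not all zero, and let $G\subseteq\mathbb{R}\times\mathrm{U}(1)^2$ be the subgroup of elements $(c,e^{i\phi_1},e^{i\phi_2})$ with $\lambda c+\mu\phi_1+\nu\phi_2=0$, acting on $\mathbb{R}\oplus\mathbb{C}^3$ by $(x_1,z_1,z_2,z_3)\mapsto(x_1+c,e^{i\phi_1}z_1,e^{i\phi_2}z_2,e^{-i(\phi_1+\phi_2)}z_3)$. Let $x_1(t)$ be real and $z_1(t),z_2(t),z_3(t)$ complex smooth functions satisfying $$\dot x_1=0,\quad \dot z_1=-\nu z_1-\lambda\overline{z_2z_3},\quad \dot z_2=\mu z_2-\lambda\overline{z_3z_1},\quad \dot z_3=(\nu-\mu)z_3-\lambda\overline{z_1z_2},$$ with initial point whose $G$-orbit is $2$-dimensional. Then there exists $\epsilon>0$ such that a solution exists for $t\in(-\epsilon,\epsilon)$, and $$M=\big\{\big(x_1(t)+c,\,e^{i\phi_1}z_1(t),\,e^{i\phi_2}z_2(t),\,e^{-i(\phi_1+\phi_2)}z_3(t)\big):t\in(-\epsilon,\epsilon),\ (c,e^{i\phi_1},e^{i\phi_2})\in G\big\}$$ is an associative $3$-fold in $\mathbb{R}^7$. Moreover, if $\mu,\nu$ are not both zero, $M$ does not lie in $\{x\}\times\mathbb{C}^3$ for any $x\in\mathbb{R}$, and along solutions $\mathrm{Im}(z_1z_2z_3)=A$ is a real constant.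
   Context: $\mathbb{R}^7\cong\mathbb{R}\oplus\mathbb{C}^3$ via $z_1=x_2+ix_3$, $z_2=x_4+ix_5$, $z_3=x_6+ix_7$. Associative $3$-folds are oriented $3$-dimensional submanifolds calibrated by $\varphi_0=d\mathbf{x}_{123}+d\mathbf{x}_{145}+d\mathbf{x}_{167}+d\mathbf{x}_{246}-d\mathbf{x}_{257}-d\mathbf{x}_{347}-d\mathbf{x}_{356}$ ($d\mathbf{x}_{ijk}=dx_i\wedge dx_j\wedge dx_k$), i.e. $\varphi_0|_{T_xN}=\mathrm{vol}_{T_xN}$. *)

(* Defs.v *)
From Stdlib Require Import Reals.
From Coquelicot Require Import Coquelicot.
Open Scope R_scope.

(* A point of R^7 = R (+) C^3, stored as (x1, z1, z2, z3) with
   z1 = x2 + i x3, z2 = x4 + i x5, z3 = x6 + i x7. *)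
Definition pt : Type := (R * C * C * C)%type.

Definition mkpt (x : R) (z1 z2 z3 : C) : pt := (x, z1, z2, z3).
Definition px1 (p : pt) : R := fst (fst (fst p)).
Definition pz1 (p : pt) : C := snd (fst (fst p)).
Definition pz2 (p : pt) : C := snd (fst p).
Definition pz3 (p : pt) : C := snd p.

Definition xc (i : nat) (p : pt) : R :=
  match i with
  | 1%nat => px1 p
  | 2%nat => Re (pz1 p) | 3%nat => Im (pz1 p)
  | 4%nat => Re (pz2 p) | 5%nat => Im (pz2 p)
  | 6%nat => Re (pz3 p) | 7%nat => Im (pz3 p)
  | _ => 0
  end.

Definition det3 (a11 a12 a13 a21 a22 a23 a31 a32 a33 : R) : R :=
  a11 * (a22 * a33 - a23 * a32) - a12 * (a21 * a33 - a23 * a31)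
  + a13 * (a21 * a32 - a22 * a31).

Definition dx3 (i j k : nat) (u v w : pt) : R :=
  det3 (xc i u) (xc i v) (xc i w)
       (xc j u) (xc j v) (xc j w)
       (xc k u) (xc k v) (xc k w).

Definition phi0 (u v w : pt) : R :=
  dx3 1 2 3 u v w + dx3 1 4 5 u v w + dx3 1 6 7 u v w + dx3 2 4 6 u v w
  - dx3 2 5 7 u v w - dx3 3 4 7 u v w - dx3 3 5 6 u v w.

Definition ip (u v : pt) : R :=
  xc 1 u * xc 1 v + xc 2 u * xc 2 v + xc 3 u * xc 3 v + xc 4 u * xc 4 v
  + xc 5 u * xc 5 v + xc 6 u * xc 6 v + xc 7 u * xc 7 v.

Definition gram3 (u v w : pt) : R :=
  det3 (ip u u) (ip u v) (ip u w)
       (ip v u) (ip v v) (ip v w)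
       (ip w u) (ip w v) (ip w w).

(* volume form of the oriented 3-plane spanned by (u,v,w), with orientation
   sign s = +1 (orientation of (u,v,w)) or s = -1 (opposite orientation) *)
Definition vol3 (s : R) (u v w : pt) : R := s * sqrt (gram3 u v w).

Definition e1 : R * R * R := (1, 0, 0).
Definition e2 : R * R * R := (0, 1, 0).
Definition e3 : R * R * R := (0, 0, 1).

(* An (immersed) associative 3-fold: M is the image of an open set U of R^3
   under a C^1 immersion f, oriented by a continuous orientation sign s
   (relative to the coordinate orientation of U), and phi0 restricted to
   each oriented tangent space df_u(R^3) equals its volume form. *)
Definition associative_3fold (M : pt -> Prop) : Prop :=
  exists (U : R * R * R -> Prop) (f : R * R * R -> pt)
         (df : R * R * R -> R * R * R -> pt) (s : R * R * R -> R),
    open U /\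
    (forall p, M p <-> exists u, U u /\ f u = p) /\
    (forall u, U u -> filterdiff f (locally u) (df u)) /\
    (forall u h, U u -> continuous (fun y => df y h) u) /\
    (forall u h, U u -> df u h = zero -> h = zero) /\
    (forall u, U u -> s u = 1 \/ s u = -1) /\
    (forall u, U u -> continuous s u) /\
    (forall u, U u ->
       phi0 (df u e1) (df u e2) (df u e3)
       = vol3 (s u) (df u e1) (df u e2) (df u e3)).

Definition eiphi (phi : R) : C := (cos phi, sin phi).

Definition act (c phi1 phi2 : R) (p : pt) : pt :=
  mkpt (px1 p + c) (eiphi phi1 * pz1 p)%C (eiphi phi2 * pz2 p)%C
       (eiphi (- (phi1 + phi2)) * pz3 p)%C.

(* G = { (c, e^{i phi1}, e^{i phi2}) : lambda c + mu phi1 + nu phi2 = 0 };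
   an element of R x U(1)^2 lies in G iff it has such a representative. *)
Definition inG (lam mu nu c phi1 phi2 : R) : Prop :=
  lam * c + mu * phi1 + nu * phi2 = 0.

(* Dimension of the G-orbit through p is 2: the infinitesimal action of the
   (2-dimensional) Lie algebra g = {(c,a1,a2) : lam c + mu a1 + nu a2 = 0}
   at p, (c,a1,a2) |-> (c, i a1 z1, i a2 z2, -i (a1+a2) z3), is injective
   (orbit dimension = rank of the infinitesimal action). *)
Definition orbit_dim2 (lam mu nu : R) (p : pt) : Prop :=
  forall c a1 a2 : R,
    inG lam mu nu c a1 a2 ->
    c = 0 ->
    (RtoC a1 * Ci * pz1 p)%C = RtoC 0 ->
    (RtoC a2 * Ci * pz2 p)%C = RtoC 0 ->
    (RtoC (- (a1 + a2)) * Ci * pz3 p)%C = RtoC 0 ->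
    a1 = 0 /\ a2 = 0.

Definition is_solution (lam mu nu a b : R) (x1 : R -> R) (z1 z2 z3 : R -> C)
  : Prop :=
  forall t, a < t < b ->
    is_derive x1 t 0 /\
    is_derive z1 t (RtoC (- nu) * z1 t - RtoC lam * Cconj (z2 t * z3 t))%C /\
    is_derive z2 t (RtoC mu * z2 t - RtoC lam * Cconj (z3 t * z1 t))%C /\
    is_derive z3 t (RtoC (nu - mu) * z3 t - RtoC lam * Cconj (z1 t * z2 t))%C.

Definition Mset (lam mu nu eps : R) (x1 : R -> R) (z1 z2 z3 : R -> C)
  (p : pt) : Prop :=
  exists t c phi1 phi2,
    - eps < t < eps /\ inG lam mu nu c phi1 phi2 /\
    p = act c phi1 phi2 (mkpt (x1 t) (z1 t) (z2 t) (z3 t)).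

(* Main.v *)
Require Import Defs.
From Stdlib Require Import Reals Lra Lia Psatz.
From Coquelicot Require Import Coquelicot.
Open Scope R_scope.

Lemma ballR1 (x e y : R) : ball x e y -> Rabs (y - x) < e.
Proof. exact (fun H => H). Qed.
Lemma ballR2 (x e y : R) : Rabs (y - x) < e -> ball x e y.
Proof. exact (fun H => H). Qed.

Lemma Lip_cont (f : R -> R) (M t : R) :
  0 <= M -> (forall s, Rabs (f s - f t) <= M * Rabs (s - t)) -> continuous f t.
Proof.
  intros HM H. apply (filterlim_locally f (f t)). intros e.
  assert (Hd : 0 < e / (M + 1)). { apply Rdiv_lt_0_compat. apply cond_pos. lra. }
  exists (mkposreal _ Hd). intros s Hs. apply ballR1 in Hs. apply ballR2. simpl in Hs.
  eapply Rle_lt_trans. apply H.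
  apply Rle_lt_trans with (M * (e / (M+1))).
  apply Rmult_le_compat_l; lra.
  assert (0 < e) by apply cond_pos.
  apply Rlt_le_trans with ((M+1) * (e/(M+1))). nra. right. field. lra.
Qed.

Definition RI (f : R -> R) (a b : R) : R := RInt (V := R_CompleteNormedModule) f a b.

Definition clampe (eps t : R) := Rmax (- eps) (Rmin eps t).

Lemma clampe_lip eps t t' : Rabs (clampe eps t - clampe eps t') <= Rabs (t - t').
Proof. unfold clampe, Rmax, Rmin. repeat destruct Rle_dec; split_Rabs; lra. Qed.

Lemma clampe_bnd eps t : 0 < eps -> Rabs (clampe eps t) <= eps.
Proof. intros. unfold clampe, Rmax, Rmin. repeat destruct Rle_dec; split_Rabs; lra. Qed.

Lemma clampe_id eps t : -eps < t < eps -> clampe eps t = t.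
Proof. intros. unfold clampe, Rmax, Rmin. repeat destruct Rle_dec; lra. Qed.

Lemma clampe_0 eps : 0 < eps -> clampe eps 0 = 0.
Proof. intros. unfold clampe, Rmax, Rmin. repeat destruct Rle_dec; lra. Qed.

Lemma RInt_abs_bound (f : R -> R) (a b M : R) :
  (forall x y, ex_RInt f x y) -> (forall s, Rabs (f s) <= M) ->
  Rabs (RInt f a b) <= M * Rabs (b - a).
Proof.
  intros Hex HM. destruct (Rle_dec a b) as [Hab|Hab].
  - rewrite (Rabs_right (b - a)) by lra. rewrite Rmult_comm.
    apply abs_RInt_le_const; auto.
  - rewrite <- opp_RInt_swap by auto. unfold opp; simpl. rewrite Rabs_Ropp.
    rewrite (Rabs_left (b - a)) by lra. replace (- (b - a)) with (a - b) by ring.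
    rewrite Rmult_comm. apply abs_RInt_le_const; auto. lra.
Qed.

Section Picard.
Definition St := nat -> R.
Variable G : St -> St.
Variables (L K eps : R) (w : St).
Hypothesis HLpos : 0 < L.
Hypothesis HKpos : 0 <= K.
Hypothesis Heps : 0 < eps.
Hypothesis HepsL : eps * L <= / 2.
Hypothesis HK : forall x i, Rabs (G x i) <= K.
Hypothesis HL : forall x x' d, (forall j, Rabs (x j - x' j) <= d) ->
  forall i, Rabs (G x i - G x' i) <= L * d.

Definition Lip (y : R -> St) := forall t t' i, Rabs (y t i - y t' i) <= K * Rabs (t - t').

Definition T (y : R -> St) : R -> St :=
  fun t i => w i + RI (fun s => G (y s) i) 0 (clampe eps t).

Lemma Lip_Gcont y i t : Lip y -> continuous (fun s => G (y s) i) t.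
Proof.
  intros Hy. apply (Lip_cont _ (L * K)). nra.
  intros s. rewrite Rmult_assoc. apply HL. intros j. apply Hy.
Qed.

Lemma Lip_exRInt y i : Lip y -> forall a b, ex_RInt (fun s => G (y s) i) a b.
Proof. intros Hy a b. apply (ex_RInt_continuous (V := R_CompleteNormedModule)). intros; apply Lip_Gcont; auto. Qed.

Lemma T_Lip y : Lip y -> Lip (T y).
Proof.
  intros Hy t t' i. unfold T.
  replace (w i + RI (fun s : R => G (y s) i) 0 (clampe eps t) -
     (w i + RI (fun s : R => G (y s) i) 0 (clampe eps t')))
   with (RI (fun s : R => G (y s) i) (clampe eps t') (clampe eps t)).
  2:{ assert (H : RI (fun s : R => G (y s) i) 0 (clampe eps t') + RI (fun s : R => G (y s) i) (clampe eps t') (clampe eps t) = RI (fun s : R => G (y s) i) 0 (clampe eps t))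
        by exact (RInt_Chasles (V := R_CompleteNormedModule) (fun s : R => G (y s) i) 0 (clampe eps t') (clampe eps t)
          (Lip_exRInt _ _ Hy _ _) (Lip_exRInt _ _ Hy _ _)).
      rewrite <- H. ring. }
  unfold RI. eapply Rle_trans. apply RInt_abs_bound. apply Lip_exRInt; auto. intros; apply HK.
  apply Rmult_le_compat_l; auto. apply clampe_lip.
Qed.

Lemma T_w y : Lip y -> forall t i, Rabs (T y t i - w i) <= eps * K.
Proof.
  intros Hy t i. unfold T. replace (w i + RI (fun s : R => G (y s) i) 0 (clampe eps t) - w i)
    with (RI (fun s : R => G (y s) i) 0 (clampe eps t)) by ring. unfold RI.
  eapply Rle_trans. apply RInt_abs_bound. apply Lip_exRInt; auto. intros; apply HK.
  rewrite Rmult_comm. apply Rmult_le_compat_r; auto. rewrite Rminus_0_r. apply clampe_bnd; auto.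
Qed.

Lemma T_contr y y' d : Lip y -> Lip y' -> (forall t j, Rabs (y t j - y' t j) <= d) ->
  forall t i, Rabs (T y t i - T y' t i) <= / 2 * d.
Proof.
  intros Hy Hy' Hd t i. unfold T.
  assert (Hd0 : 0 <= d). { eapply Rle_trans. apply Rabs_pos. apply (Hd 0 O). }
  replace (w i + RI (fun s : R => G (y s) i) 0 (clampe eps t) -
     (w i + RI (fun s : R => G (y' s) i) 0 (clampe eps t)))
   with (RI (fun s : R => G (y s) i - G (y' s) i) 0 (clampe eps t)).
  2:{ assert (H : RI (fun s : R => G (y s) i - G (y' s) i) 0 (clampe eps t) =
        RI (fun s : R => G (y s) i) 0 (clampe eps t) - RI (fun s : R => G (y' s) i) 0 (clampe eps t))
      by exact (RInt_minus (V := R_CompleteNormedModule) (fun s => G (y s) i) (fun s => G (y' s) i) _ _ (Lip_exRInt _ _ Hy _ _) (Lip_exRInt _ _ Hy' _ _)).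
      rewrite H. ring. }
  unfold RI.
  eapply Rle_trans. apply RInt_abs_bound.
  intros a b. apply (ex_RInt_minus (fun s => G (y s) i) (fun s => G (y' s) i)); apply Lip_exRInt; auto.
  intros s. apply HL. intros j. apply Hd.
  rewrite Rminus_0_r. eapply Rle_trans. apply Rmult_le_compat_l. nra. apply clampe_bnd; auto.
  nra.
Qed.

Fixpoint Y (n : nat) : R -> St :=
  match n with O => fun _ i => w i | S n => T (Y n) end.

Lemma Y_Lip n : Lip (Y n).
Proof.
  induction n; simpl.
  - intros t t' i. rewrite Rminus_eq_0, Rabs_R0. apply Rmult_le_pos; auto. apply Rabs_pos.
  - apply T_Lip; auto.
Qed.

Lemma Y_step n : forall t i, Rabs (Y (S n) t i - Y n t i) <= eps * K * (/2) ^ n.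
Proof.
  induction n; intros t i.
  - simpl. rewrite Rmult_1_r. apply T_w. intros a b j. rewrite Rminus_eq_0, Rabs_R0.
    apply Rmult_le_pos; auto. apply Rabs_pos.
  - change (Y (S (S n))) with (T (Y (S n))). change (Y (S n)) with (T (Y n)) at 2.
    eapply Rle_trans. apply T_contr. apply Y_Lip. apply Y_Lip. apply IHn.
    simpl. right; ring.
Qed.

Lemma Y_cauchy N m : forall t i,
  Rabs (Y (N + m) t i - Y N t i) <= 2 * eps * K * (/2) ^ N * (1 - (/2) ^ m).
Proof.
  induction m; intros t i.
  - rewrite Nat.add_0_r, Rminus_eq_0, Rabs_R0. simpl. right; ring.
  - rewrite Nat.add_succ_r.
    replace (Y (S (N + m)) t i - Y N t i) with
      ((Y (S (N + m)) t i - Y (N+m) t i) + (Y (N + m) t i - Y N t i)) by ring.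
    eapply Rle_trans. apply Rabs_triang.
    eapply Rle_trans. apply Rplus_le_compat. apply Y_step. apply IHm.
    rewrite pow_add. simpl. right; field.
Qed.

Lemma Y_cauchy' N n : (N <= n)%nat -> forall t i,
  Rabs (Y n t i - Y N t i) <= 2 * eps * K * (/2) ^ N.
Proof.
  intros H t i. replace n with (N + (n - N))%nat by lia.
  eapply Rle_trans. apply Y_cauchy.
  assert (0 <= (/2)^N) by (apply pow_le; lra).
  assert (0 <= (/2)^(n-N)) by (apply pow_le; lra).
  assert (0 <= eps * K) by nra.
  assert (0 <= eps * K * (/2)^N * (/2)^(n-N)) by (repeat apply Rmult_le_pos; try lra; apply pow_le; lra).
  lra.
Qed.

Definition FS := fct_CompleteSpace (T := R) (U := fct_CompleteSpace (T := nat) (U := R_CompleteSpace)).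

Definition Ylim : R -> St := lim (T := FS) (filtermap (Y : nat -> FS) eventually).

Lemma Ylim_conv : forall e : R, 0 < e -> exists N, forall n, (N <= n)%nat ->
  forall t i, Rabs (Y n t i - Ylim t i) < e.
Proof.
  intros e He.
  assert (Hc := complete_cauchy (T := FS) (filtermap (Y : nat -> FS) eventually)).
  destruct (Hc (filtermap_proper_filter _ _ _ _ eventually_filter)) with (mkposreal e He) as [N HN].
  - intros e'. assert (He' : 0 < e') by apply cond_pos.
    assert (0 <= eps * K) by nra.
    destruct (pow_lt_1_zero (/2)) with (e' / (2 * eps * K + 1)) as [N HN].
    rewrite Rabs_right; lra. apply Rdiv_lt_0_compat; lra.
    exists (Y N). exists N. intros n Hn t i. apply ballR2.
    eapply Rle_lt_trans. apply Y_cauchy'. exact Hn.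
    specialize (HN N (Nat.le_refl N)). rewrite Rabs_right in HN by (apply Rle_ge, pow_le; lra).
    assert (0 <= (/2)^N) by (apply pow_le; lra).
    assert (HN' : (2*eps*K+1) * (/2)^N < e').
    { apply (Rmult_lt_compat_l (2*eps*K+1)) in HN; [|lra].
      replace ((2*eps*K+1) * (pos e'/(2*eps*K+1))) with (pos e') in HN by (field; lra). exact HN. }
    lra.
  - exists N. intros n Hn t i. specialize (HN n Hn t i). apply ballR1 in HN. exact HN.
Qed.

Lemma Ylim_Lip : Lip Ylim.
Proof.
  intros t t' i. apply le_epsilon. intros e He.
  destruct (Ylim_conv (e/2)) as [N HN]. lra.
  specialize (HN N (Nat.le_refl _)).
  assert (H1 := HN t i). assert (H2 := HN t' i). assert (H3 := Y_Lip N t t' i).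
  replace (Ylim t i - Ylim t' i) with ((Y N t i - Ylim t' i) - (Y N t i - Ylim t i)) by ring.
  replace (Y N t i - Ylim t' i) with ((Y N t i - Y N t' i) + (Y N t' i - Ylim t' i)) by ring.
  split_Rabs; lra.
Qed.

Lemma Ylim_fix : forall t i, Ylim t i = T Ylim t i.
Proof.
  intros t i. apply Rminus_diag_uniq. apply Rabs_eq_0. apply Rle_antisym; [|apply Rabs_pos].
  apply le_epsilon. intros e He. rewrite Rplus_0_l.
  destruct (Ylim_conv (e/2)) as [N HN]. lra.
  assert (H1 := HN (S N) (le_S _ _ (Nat.le_refl _)) t i).
  assert (H2 : forall t j, Rabs (Y N t j - Ylim t j) <= e / 2).
  { intros; left; apply HN; lia. }
  assert (H3 := T_contr _ _ _ (Y_Lip N) Ylim_Lip H2 t i).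
  change (Y (S N)) with (T (Y N)) in H1.
  replace (Ylim t i - T Ylim t i) with ((T (Y N) t i - T Ylim t i) - (T (Y N) t i - Ylim t i)) by ring.
  split_Rabs; lra.
Qed.

Lemma Ylim_0 : forall i, Ylim 0 i = w i.
Proof.
  intros i. rewrite Ylim_fix. unfold T. rewrite clampe_0 by auto. unfold RI. rewrite RInt_point.
  unfold zero; simpl; ring.
Qed.

Lemma Ylim_w : forall t i, Rabs (Ylim t i - w i) <= eps * K.
Proof. intros t i. rewrite Ylim_fix. apply T_w. apply Ylim_Lip. Qed.

Lemma Ylim_deriv : forall t i, -eps < t < eps ->
  is_derive (fun s => Ylim s i) t (G (Ylim t) i).
Proof.
  intros t i Ht.
  set (f := fun s => G (Ylim s) i).
  apply (is_derive_ext_loc (fun s => w i + RI f 0 s)).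
  - assert (Hr : 0 < Rmin (eps - t) (eps + t)) by (apply Rmin_pos; lra).
    exists (mkposreal _ Hr). intros s Hs. apply ballR1 in Hs. simpl in Hs.
    assert (Hs1 := Rmin_l (eps - t) (eps + t)). assert (Hs2 := Rmin_r (eps - t) (eps + t)).
    rewrite Ylim_fix. unfold T. rewrite clampe_id. reflexivity. split_Rabs; lra.
  - assert (HD : is_derive (fun s => RI f 0 s) t (f t)).
    { apply (is_derive_RInt f (fun s => RI f 0 s) 0 t).
      + exists (mkposreal _ Rlt_0_1). intros b _. apply (RInt_correct (V := R_CompleteNormedModule)).
        apply Lip_exRInt. apply Ylim_Lip.
      + apply Lip_Gcont. apply Ylim_Lip. }
    pose proof (is_derive_plus (fun _ : R => w i) (fun s => RI f 0 s) t zero (f t) (is_derive_const (w i) t) HD) as HD2.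
    replace (G (Ylim t) i) with (plus (@zero R_NormedModule) (f t)). exact HD2.
    unfold plus, zero; simpl; unfold f; ring.
Qed.

End Picard.

Definition comp (c l s1 s2 x a b e f : R) := c * x + l * (s1 * (a * b) + s2 * (e * f)).

Definition Fv (l m n : R) (x : St) : St := fun i =>
  match i with
  | 0 => comp (-n) l (-1) 1 (x 0%nat) (x 2%nat) (x 4%nat) (x 3%nat) (x 5%nat)
  | 1 => comp (-n) l 1 1 (x 1%nat) (x 2%nat) (x 5%nat) (x 3%nat) (x 4%nat)
  | 2 => comp m l (-1) 1 (x 2%nat) (x 4%nat) (x 0%nat) (x 5%nat) (x 1%nat)
  | 3 => comp m l 1 1 (x 3%nat) (x 4%nat) (x 1%nat) (x 5%nat) (x 0%nat)
  | 4 => comp (n - m) l (-1) 1 (x 4%nat) (x 0%nat) (x 2%nat) (x 1%nat) (x 3%nat)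
  | 5 => comp (n - m) l 1 1 (x 5%nat) (x 0%nat) (x 3%nat) (x 1%nat) (x 2%nat)
  | _ => 0
  end.

Lemma prod_lip a b a' b' B d : Rabs a <= B -> Rabs b' <= B -> Rabs (a - a') <= d -> Rabs (b - b') <= d ->
  Rabs (a * b - a' * b') <= 2 * B * d.
Proof.
  intros H1 H2 H3 H4.
  replace (a * b - a' * b') with (a * (b - b') + b' * (a - a')) by ring.
  eapply Rle_trans. apply Rabs_triang. rewrite !Rabs_mult.
  assert (0 <= Rabs (b - b')) by apply Rabs_pos. assert (0 <= Rabs (a - a')) by apply Rabs_pos.
  assert (0 <= Rabs a) by apply Rabs_pos. assert (0 <= Rabs b') by apply Rabs_pos.
  assert (Rabs a * Rabs (b - b') <= B * d) by (apply Rmult_le_compat; auto).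
  assert (Rabs b' * Rabs (a - a') <= B * d) by (apply Rmult_le_compat; auto).
  lra.
Qed.

Lemma comp_lip c l s1 s2 x a b e f x' a' b' e' f' Lam B d :
  Rabs c <= Lam -> Rabs l <= Lam -> Rabs s1 <= 1 -> Rabs s2 <= 1 ->
  Rabs a <= B -> Rabs b' <= B -> Rabs e <= B -> Rabs f' <= B ->
  Rabs (x - x') <= d -> Rabs (a - a') <= d -> Rabs (b - b') <= d ->
  Rabs (e - e') <= d -> Rabs (f - f') <= d ->
  Rabs (comp c l s1 s2 x a b e f - comp c l s1 s2 x' a' b' e' f') <= Lam * (1 + 4 * B) * d.
Proof.
  intros Hc Hl Hs1 Hs2 Ha Hb He Hf Hx Ha' Hb' He' Hf'.
  assert (P1 := prod_lip a b a' b' B d Ha Hb Ha' Hb').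
  assert (P2 := prod_lip e f e' f' B d He Hf He' Hf').
  unfold comp.
  replace (c * x + l * (s1 * (a * b) + s2 * (e * f)) - (c * x' + l * (s1 * (a' * b') + s2 * (e' * f'))))
    with (c * (x - x') + l * (s1 * (a * b - a' * b') + s2 * (e * f - e' * f'))) by ring.
  eapply Rle_trans. apply Rabs_triang. rewrite !Rabs_mult.
  assert (0 <= d) by (eapply Rle_trans; [apply Rabs_pos|exact Hx]).
  assert (0 <= Lam) by (eapply Rle_trans; [apply Rabs_pos|exact Hc]).
  assert (Rabs c * Rabs (x - x') <= Lam * d) by (apply Rmult_le_compat; auto; apply Rabs_pos).
  assert (Rabs (s1 * (a * b - a' * b') + s2 * (e * f - e' * f')) <= 4 * B * d).
  { eapply Rle_trans. apply Rabs_triang. rewrite !Rabs_mult.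
    assert (Rabs s1 * Rabs (a * b - a' * b') <= 1 * (2 * B * d)) by (apply Rmult_le_compat; auto; apply Rabs_pos).
    assert (Rabs s2 * Rabs (e * f - e' * f') <= 1 * (2 * B * d)) by (apply Rmult_le_compat; auto; apply Rabs_pos).
    lra. }
  assert (Rabs l * Rabs (s1 * (a * b - a' * b') + s2 * (e * f - e' * f')) <= Lam * (4 * B * d))
    by (apply Rmult_le_compat; auto; apply Rabs_pos).
  lra.
Qed.

Lemma comp_bnd c l s1 s2 x a b e f Lam B :
  Rabs c <= Lam -> Rabs l <= Lam -> Rabs s1 <= 1 -> Rabs s2 <= 1 ->
  Rabs x <= B -> Rabs a <= B -> Rabs b <= B -> Rabs e <= B -> Rabs f <= B ->
  Rabs (comp c l s1 s2 x a b e f) <= Lam * (B + 2 * (B * B)).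
Proof.
  intros Hc Hl Hs1 Hs2 Hx Ha Hb He Hf. unfold comp.
  assert (0 <= B) by (eapply Rle_trans; [apply Rabs_pos|exact Hx]).
  assert (0 <= Lam) by (eapply Rle_trans; [apply Rabs_pos|exact Hc]).
  eapply Rle_trans. apply Rabs_triang. rewrite !Rabs_mult.
  assert (Rabs c * Rabs x <= Lam * B) by (apply Rmult_le_compat; auto; apply Rabs_pos).
  assert (Rabs (s1 * (a * b) + s2 * (e * f)) <= 2 * (B * B)).
  { eapply Rle_trans. apply Rabs_triang. rewrite !Rabs_mult.
    assert (Rabs a * Rabs b <= B * B) by (apply Rmult_le_compat; auto; apply Rabs_pos).
    assert (Rabs e * Rabs f <= B * B) by (apply Rmult_le_compat; auto; apply Rabs_pos).
    assert (Rabs s1 * (Rabs a * Rabs b) <= 1 * (B * B)) by (apply Rmult_le_compat; auto; try apply Rabs_pos;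
      apply Rmult_le_pos; apply Rabs_pos).
    assert (Rabs s2 * (Rabs e * Rabs f) <= 1 * (B * B)) by (apply Rmult_le_compat; auto; try apply Rabs_pos;
      apply Rmult_le_pos; apply Rabs_pos).
    lra. }
  assert (Rabs l * Rabs (s1 * (a * b) + s2 * (e * f)) <= Lam * (2 * (B * B)))
    by (apply Rmult_le_compat; auto; apply Rabs_pos).
  lra.
Qed.

Section Conc.
Variables (l m n : R) (w : St).

Definition Bw := 1 + Rabs (w 0%nat) + Rabs (w 1%nat) + Rabs (w 2%nat) + Rabs (w 3%nat)
   + Rabs (w 4%nat) + Rabs (w 5%nat).
Definition Lam := Rabs l + Rabs m + Rabs n.
Definition cl (x : St) : St := fun j => Rmax (w j - 1) (Rmin (w j + 1) (x j)).
Definition Gc (x : St) : St := Fv l m n (cl x).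
Definition Lc := Lam * (1 + 4 * Bw) + 1.
Definition Kc := Lam * (Bw + 2 * (Bw * Bw)).
Definition epsc := Rmin (/ (2 * Lc)) (/ (Kc + 1)).

Lemma cl_lip x x' j : Rabs (cl x j - cl x' j) <= Rabs (x j - x' j).
Proof. unfold cl, Rmax, Rmin. repeat destruct Rle_dec; split_Rabs; lra. Qed.

Lemma cl_bnd x j : (j < 6)%nat -> Rabs (cl x j) <= Bw.
Proof.
  intros Hj. assert (Rabs (cl x j) <= Rabs (w j) + 1).
  { unfold cl, Rmax, Rmin. repeat destruct Rle_dec; split_Rabs; lra. }
  unfold Bw. assert (H0 := Rabs_pos (w 0%nat)). assert (H1 := Rabs_pos (w 1%nat)).
  assert (H2 := Rabs_pos (w 2%nat)). assert (H3 := Rabs_pos (w 3%nat)).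
  assert (H4 := Rabs_pos (w 4%nat)). assert (H5 := Rabs_pos (w 5%nat)).
  destruct j as [|[|[|[|[|[|j]]]]]]; try lra. lia.
Qed.

Lemma cl_id x j : Rabs (x j - w j) <= 1 -> cl x j = x j.
Proof. intros H. unfold cl, Rmax, Rmin. repeat destruct Rle_dec; split_Rabs; lra. Qed.

Lemma Lam_pos : 0 <= Lam.
Proof. unfold Lam. assert (H0 := Rabs_pos l). assert (H1 := Rabs_pos m). assert (H2 := Rabs_pos n). lra. Qed.

Lemma Bw_pos : 1 <= Bw.
Proof.
  unfold Bw. assert (H0 := Rabs_pos (w 0%nat)). assert (H1 := Rabs_pos (w 1%nat)).
  assert (H2 := Rabs_pos (w 2%nat)). assert (H3 := Rabs_pos (w 3%nat)).
  assert (H4 := Rabs_pos (w 4%nat)). assert (H5 := Rabs_pos (w 5%nat)). lra.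
Qed.

Lemma coefs_le : Rabs (-n) <= Lam /\ Rabs m <= Lam /\ Rabs (n - m) <= Lam /\ Rabs l <= Lam
  /\ Rabs (-1) <= 1 /\ Rabs 1 <= 1.
Proof.
  unfold Lam. rewrite Rabs_Ropp, Rabs_R1. assert (H0 := Rabs_pos l). assert (H1 := Rabs_pos m).
  assert (H2 := Rabs_pos n). assert (Rabs (n - m) <= Rabs n + Rabs m).
  { unfold Rminus. eapply Rle_trans. apply Rabs_triang. rewrite Rabs_Ropp. lra. }
  assert (Rabs (-1) = 1) by (rewrite Rabs_left; lra).
  repeat split; lra.
Qed.

Lemma Gc_bnd x i : Rabs (Gc x i) <= Kc.
Proof.
  unfold Gc, Kc. destruct coefs_le as (C1 & C2 & C3 & C4 & C5 & C6).
  assert (B0 := cl_bnd x 0 ltac:(lia)). assert (B1 := cl_bnd x 1 ltac:(lia)).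
  assert (B2 := cl_bnd x 2 ltac:(lia)). assert (B3 := cl_bnd x 3 ltac:(lia)).
  assert (B4 := cl_bnd x 4 ltac:(lia)). assert (B5 := cl_bnd x 5 ltac:(lia)).
  destruct i as [|[|[|[|[|[|i]]]]]]; simpl; try (apply comp_bnd; auto).
  rewrite Rabs_R0. assert (0 <= Bw) by (assert (H := Bw_pos); lra).
  assert (HLm := Lam_pos). apply Rmult_le_pos; auto. nra.
Qed.

Lemma Gc_lip x x' d : (forall j, Rabs (x j - x' j) <= d) ->
  forall i, Rabs (Gc x i - Gc x' i) <= Lc * d.
Proof.
  intros Hd i.
  assert (Hd0 : 0 <= d) by (eapply Rle_trans; [apply Rabs_pos|apply (Hd 0%nat)]).
  assert (Hd' : forall j, Rabs (cl x j - cl x' j) <= d) by (intros j; eapply Rle_trans; [apply cl_lip|apply Hd]).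
  assert (Lam * (1 + 4 * Bw) * d <= Lc * d) by (apply Rmult_le_compat_r; unfold Lc; lra).
  eapply Rle_trans; [|exact H].
  unfold Gc. destruct coefs_le as (C1 & C2 & C3 & C4 & C5 & C6).
  assert (B0 := cl_bnd x 0 ltac:(lia)). assert (B1 := cl_bnd x 1 ltac:(lia)).
  assert (B2 := cl_bnd x 2 ltac:(lia)). assert (B3 := cl_bnd x 3 ltac:(lia)).
  assert (B4 := cl_bnd x 4 ltac:(lia)). assert (B5 := cl_bnd x 5 ltac:(lia)).
  assert (B0' := cl_bnd x' 0 ltac:(lia)). assert (B1' := cl_bnd x' 1 ltac:(lia)).
  assert (B2' := cl_bnd x' 2 ltac:(lia)). assert (B3' := cl_bnd x' 3 ltac:(lia)).
  assert (B4' := cl_bnd x' 4 ltac:(lia)). assert (B5' := cl_bnd x' 5 ltac:(lia)).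
  destruct i as [|[|[|[|[|[|i]]]]]]; simpl; try (apply comp_lip; auto).
  rewrite Rminus_0_r, Rabs_R0. assert (H1 := Lam_pos). assert (H2 := Bw_pos).
  apply Rmult_le_pos; auto. nra.
Qed.

Lemma Lc_pos : 0 < Lc.
Proof. unfold Lc. assert (H1 := Lam_pos). assert (H2 := Bw_pos). nra. Qed.
Lemma Kc_pos : 0 <= Kc.
Proof. unfold Kc. assert (H1 := Lam_pos). assert (H2 := Bw_pos). apply Rmult_le_pos; nra. Qed.
Lemma epsc_pos : 0 < epsc.
Proof.
  unfold epsc. assert (H1 := Lc_pos). assert (H2 := Kc_pos).
  apply Rmin_pos; apply Rinv_0_lt_compat; lra.
Qed.
Lemma epsc_L : epsc * Lc <= / 2.
Proof.
  unfold epsc. assert (H1 := Lc_pos).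
  apply Rle_trans with (/ (2 * Lc) * Lc). apply Rmult_le_compat_r. lra. apply Rmin_l.
  right. field. lra.
Qed.
Lemma epsc_K : epsc * Kc <= 1.
Proof.
  unfold epsc. assert (H1 := Kc_pos).
  apply Rle_trans with (/ (Kc + 1) * Kc). apply Rmult_le_compat_r. lra. apply Rmin_r.
  apply Rle_trans with (/ (Kc + 1) * (Kc + 1)). apply Rmult_le_compat_l. left; apply Rinv_0_lt_compat; lra. lra.
  right. field. lra.
Qed.

Definition ysol := Ylim Gc epsc w.

Lemma ysol_0 i : ysol 0 i = w i.
Proof. exact (Ylim_0 Gc Lc Kc epsc w Lc_pos Kc_pos epsc_pos epsc_L Gc_bnd Gc_lip i). Qed.

Lemma ysol_Lip : Lip Kc ysol.
Proof. exact (Ylim_Lip Gc Lc Kc epsc w Lc_pos Kc_pos epsc_pos epsc_L Gc_bnd Gc_lip). Qed.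

Lemma ysol_cont i t : continuous (fun s => ysol s i) t.
Proof. apply (Lip_cont _ Kc). apply Kc_pos. intros s. apply ysol_Lip. Qed.

Lemma ysol_deriv t i : - epsc < t < epsc -> is_derive (fun s => ysol s i) t (Fv l m n (ysol t) i).
Proof.
  intros Ht.
  assert (H := Ylim_deriv Gc Lc Kc epsc w Lc_pos Kc_pos epsc_pos epsc_L Gc_bnd Gc_lip t i Ht).
  assert (E : Gc (ysol t) i = Fv l m n (ysol t) i).
  { unfold Gc.
    assert (Hc : forall j, cl (ysol t) j = ysol t j).
    { intros j. apply cl_id. eapply Rle_trans.
      exact (Ylim_w Gc Lc Kc epsc w Lc_pos Kc_pos epsc_pos epsc_L Gc_bnd Gc_lip t j). apply epsc_K. }
    destruct i as [|[|[|[|[|[|i]]]]]]; simpl; rewrite ?Hc; reflexivity. }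
  rewrite <- E. exact H.
Qed.

End Conc.

Lemma C_ext (a b : C) : fst a = fst b -> snd a = snd b -> a = b.
Proof. destruct a, b; simpl; intros; subst; reflexivity. Qed.

Lemma fd_pair {U V W : NormedModule R_AbsRing} (f : U -> V) (g : U -> W) x lf lg :
  filterdiff f (locally x) lf -> filterdiff g (locally x) lg ->
  filterdiff (fun u => (f u, g u)) (locally x) (fun u => (lf u, lg u)).
Proof.
  intros Hf Hg.
  apply (filterdiff_comp'_2 f g (fun a b => (a, b)) x lf lg (fun a b => (a, b)) Hf Hg).
  apply filterdiff_linear. apply is_linear_prod. apply is_linear_fst. apply is_linear_snd.
Qed.

Lemma D_pair {V W : NormedModule R_AbsRing} (f : R -> V) (g : R -> W) t a b :
  is_derive f t a -> is_derive g t b -> is_derive (fun s => (f s, g s)) t (a, b).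
Proof.
  intros Hf Hg. unfold is_derive. eapply filterdiff_ext_lin.
  apply (fd_pair f g t _ _ Hf Hg). intros y. reflexivity.
Qed.

Lemma D_fst {V W : NormedModule R_AbsRing} (z : R -> V * W) t l :
  is_derive z t l -> is_derive (fun s => fst (z s)) t (fst l).
Proof.
  intros H. unfold is_derive. eapply filterdiff_ext_lin.
  apply (filterdiff_comp' z (fun c => fst c) t _ (fun c : prod_NormedModule _ V W => fst c) H).
  apply filterdiff_linear, is_linear_fst. intros y. reflexivity.
Qed.

Lemma D_snd {V W : NormedModule R_AbsRing} (z : R -> V * W) t l :
  is_derive z t l -> is_derive (fun s => snd (z s)) t (snd l).
Proof.
  intros H. unfold is_derive. eapply filterdiff_ext_lin.
  apply (filterdiff_comp' z (fun c => snd c) t _ (fun c : prod_NormedModule _ V W => snd c) H).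
  apply filterdiff_linear, is_linear_snd. intros y. reflexivity.
Qed.

Lemma const_on_interval (f : R -> R) a b :
  (forall t, a < t < b -> is_derive f t 0) ->
  exists A, forall t, a < t < b -> f t = A.
Proof.
  intros H. destruct (Rlt_dec a b) as [Hab|Hab].
  - exists (f ((a + b) / 2)). intros t Ht.
    destruct (Rtotal_order t ((a+b)/2)) as [Hl|[He|Hg]].
    + apply (eq_is_derive f t ((a+b)/2)); [|lra]. intros s Hs. apply H. lra.
    + subst; reflexivity.
    + symmetry. apply (eq_is_derive f ((a+b)/2) t); [|lra]. intros s Hs. apply H. lra.
  - exists 0. intros t Ht. lra.
Qed.

Lemma conserved (lam mu nu : R) (z1 z2 z3 : R -> C) t :
  is_derive z1 t (RtoC (- nu) * z1 t - RtoC lam * Cconj (z2 t * z3 t))%C ->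
  is_derive z2 t (RtoC mu * z2 t - RtoC lam * Cconj (z3 t * z1 t))%C ->
  is_derive z3 t (RtoC (nu - mu) * z3 t - RtoC lam * Cconj (z1 t * z2 t))%C ->
  is_derive (fun s => Im (z1 s * z2 s * z3 s)%C) t 0.
Proof.
  intros H1 H2 H3.
  assert (A1 := D_fst _ _ _ H1). assert (B1 := D_snd _ _ _ H1).
  assert (A2 := D_fst _ _ _ H2). assert (B2 := D_snd _ _ _ H2).
  assert (A3 := D_fst _ _ _ H3). assert (B3 := D_snd _ _ _ H3).
  set (p1 := fun s => fst (z1 s)) in *. set (q1 := fun s => snd (z1 s)) in *.
  set (p2 := fun s => fst (z2 s)) in *. set (q2 := fun s => snd (z2 s)) in *.
  set (p3 := fun s => fst (z3 s)) in *. set (q3 := fun s => snd (z3 s)) in *.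
  apply (is_derive_ext (fun s => (p1 s * p2 s - q1 s * q2 s) * q3 s + (p1 s * q2 s + q1 s * p2 s) * p3 s)).
  { intros s. unfold p1, p2, p3, q1, q2, q3. destruct (z1 s), (z2 s), (z3 s). simpl. ring. }
  auto_derive.
  - repeat split; eexists; eassumption.
  - rewrite (is_derive_unique (fun x : R => p1 x) t _ A1), (is_derive_unique (fun x : R => p2 x) t _ A2),
      (is_derive_unique (fun x : R => p3 x) t _ A3), (is_derive_unique (fun x : R => q1 x) t _ B1),
      (is_derive_unique (fun x : R => q2 x) t _ B2), (is_derive_unique (fun x : R => q3 x) t _ B3).
    unfold p1, p2, p3, q1, q2, q3. destruct (z1 t), (z2 t), (z3 t). simpl. ring.
Qed.

Definition coords (q : pt) : St := fun i =>
  match i with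
  | 0 => fst (pz1 q) | 1 => snd (pz1 q) | 2 => fst (pz2 q) | 3 => snd (pz2 q)
  | 4 => fst (pz3 q) | 5 => snd (pz3 q) | _ => 0 end.

Definition Xf (c a1 a2 : R) (q : pt) : pt :=
  mkpt c (- a1 * snd (pz1 q), a1 * fst (pz1 q)) (- a2 * snd (pz2 q), a2 * fst (pz2 q))
    ((a1 + a2) * snd (pz3 q), - (a1 + a2) * fst (pz3 q)).

Definition Vf (l m n : R) (q : pt) : pt :=
  mkpt 0 (Fv l m n (coords q) 0%nat, Fv l m n (coords q) 1%nat) (Fv l m n (coords q) 2%nat, Fv l m n (coords q) 3%nat)
    (Fv l m n (coords q) 4%nat, Fv l m n (coords q) 5%nat).

Definition gram2 (u v : pt) := ip u u * ip v v - ip u v * ip u v.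

Ltac unf := unfold phi0, gram3, gram2, dx3, det3, ip, xc, Xf, Vf, Fv, comp, coords, mkpt, px1, pz1, pz2, pz3, Re, Im; simpl.

Lemma I1 c a1 a2 l m n q : ip (Xf c a1 a2 q) (Vf l m n q) = 0.
Proof. destruct q as [[[x [p1 r1]] [p2 r2]] [p3 r3]]. unf. ring. Qed.

Lemma I2 c a1 a2 c' a1' a2' l m n q :
  phi0 (Xf c a1 a2 q) (Xf c' a1' a2' q) (Vf l m n q) =
  ip (Vf (a1 * a2' - a2 * a1') (a2 * c' - c * a2') (c * a1' - a1 * c') q) (Vf l m n q).
Proof. destruct q as [[[x [p1 r1]] [p2 r2]] [p3 r3]]. unf. ring. Qed.

Lemma I3 c a1 a2 c' a1' a2' q :
  gram2 (Xf c a1 a2 q) (Xf c' a1' a2' q) =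
  ip (Vf (a1 * a2' - a2 * a1') (a2 * c' - c * a2') (c * a1' - a1 * c') q)
     (Vf (a1 * a2' - a2 * a1') (a2 * c' - c * a2') (c * a1' - a1 * c') q).
Proof. destruct q as [[[x [p1 r1]] [p2 r2]] [p3 r3]]. unf. ring. Qed.

Lemma I4 u v w : ip u w = 0 -> ip v w = 0 -> gram3 u v w = gram2 u v * ip w w.
Proof.
  intros H1 H2. assert (E1 : ip w u = ip u w) by (unfold ip; ring).
  assert (E2 : ip w v = ip v w) by (unfold ip; ring).
  assert (E3 : ip v u = ip u v) by (unfold ip; ring).
  unfold gram3, gram2, det3. rewrite E1, E2, E3, H1, H2. ring.
Qed.

Lemma Vscale l m n k q : Vf (k * l) (k * m) (k * n) q = 
  mkpt 0 (k * fst (pz1 (Vf l m n q)), k * snd (pz1 (Vf l m n q)))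
         (k * fst (pz2 (Vf l m n q)), k * snd (pz2 (Vf l m n q)))
         (k * fst (pz3 (Vf l m n q)), k * snd (pz3 (Vf l m n q))).
Proof. destruct q as [[[x [p1 r1]] [p2 r2]] [p3 r3]]. unf. f_equal; [f_equal; [f_equal|]|]; f_equal; ring. Qed.

Lemma ip_scale_l k u v : ip (mkpt (k * px1 u) (k * fst (pz1 u), k * snd (pz1 u))
         (k * fst (pz2 u), k * snd (pz2 u)) (k * fst (pz3 u), k * snd (pz3 u))) v = k * ip u v.
Proof. unfold ip, xc, mkpt, px1, pz1, pz2, pz3, Re, Im; simpl. ring. Qed.

Lemma VV_scale l m n c q :
  ip (Vf (c * l) (c * m) (c * n) q) (Vf (c * l) (c * m) (c * n) q) = c * c * ip (Vf l m n q) (Vf l m n q).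
Proof. destruct q as [[[x [p1 r1]] [p2 r2]] [p3 r3]]. unf. ring. Qed.

Lemma VW_scale l m n c q :
  ip (Vf (c * l) (c * m) (c * n) q) (Vf l m n q) = c * ip (Vf l m n q) (Vf l m n q).
Proof. destruct q as [[[x [p1 r1]] [p2 r2]] [p3 r3]]. unf. ring. Qed.

Lemma pt_eq (q q' : pt) : px1 q = px1 q' -> fst (pz1 q) = fst (pz1 q') -> snd (pz1 q) = snd (pz1 q') ->
  fst (pz2 q) = fst (pz2 q') -> snd (pz2 q) = snd (pz2 q') ->
  fst (pz3 q) = fst (pz3 q') -> snd (pz3 q) = snd (pz3 q') -> q = q'.
Proof.
  destruct q as [[[x [p1 r1]] [p2 r2]] [p3 r3]], q' as [[[x' [p1' r1']] [p2' r2']] [p3' r3']].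
  unfold px1, pz1, pz2, pz3; simpl. intros; subst; reflexivity.
Qed.

Definition rotpt (x c1 s1 c2 s2 c3 s3 : R) (q : pt) : pt :=
  mkpt (px1 q + x)
    (c1 * fst (pz1 q) - s1 * snd (pz1 q), c1 * snd (pz1 q) + s1 * fst (pz1 q))
    (c2 * fst (pz2 q) - s2 * snd (pz2 q), c2 * snd (pz2 q) + s2 * fst (pz2 q))
    (c3 * fst (pz3 q) - s3 * snd (pz3 q), c3 * snd (pz3 q) + s3 * fst (pz3 q)).

Lemma act_rot c p1 p2 q : act c p1 p2 q =
  rotpt c (cos p1) (sin p1) (cos p2) (sin p2) (cos (- (p1 + p2))) (sin (- (p1 + p2))) q.
Proof. destruct q as [[[x [a1 b1]] [a2 b2]] [a3 b3]]. reflexivity. Qed.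

Lemma Vf_equiv l m n x c1 s1 c2 s2 c3 s3 q :
  c1 = c2 * c3 - s2 * s3 -> s1 = - (s2 * c3 + c2 * s3) ->
  c2 * c2 + s2 * s2 = 1 -> c3 * c3 + s3 * s3 = 1 ->
  Vf l m n (rotpt x c1 s1 c2 s2 c3 s3 q) = rotpt 0 c1 s1 c2 s2 c3 s3 (Vf l m n q).
Proof.
  intros -> -> N2 N3. destruct q as [[[x0 [p1 r1]] [p2 r2]] [p3 r3]].
  apply pt_eq; unfold rotpt; unf; apply Rminus_diag_uniq.
  - ring.
  - ring.
  - ring.
  - transitivity ((-l) * (c3*c3+s3*s3-1) * (c2 * (p3*p1 - r3*r1) + s2 * (p3*r1 + r3*p1))).
    ring. rewrite N3; ring.
  - transitivity ((-l) * (c3*c3+s3*s3-1) * (- c2 * (p3*r1 + r3*p1) + s2 * (p3*p1 - r3*r1))).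
    ring. rewrite N3; ring.
  - transitivity ((-l) * (c2*c2+s2*s2-1) * (c3 * (p1*p2 - r1*r2) + s3 * (p1*r2 + r1*p2))).
    ring. rewrite N2; ring.
  - transitivity ((-l) * (c2*c2+s2*s2-1) * (- c3 * (p1*r2 + r1*p2) + s3 * (p1*p2 - r1*r2))).
    ring. rewrite N2; ring.
Qed.

Lemma ipV_rot l m n x c1 s1 c2 s2 c3 s3 q :
  c1 = c2 * c3 - s2 * s3 -> s1 = - (s2 * c3 + c2 * s3) ->
  c2 * c2 + s2 * s2 = 1 -> c3 * c3 + s3 * s3 = 1 ->
  ip (Vf l m n (rotpt x c1 s1 c2 s2 c3 s3 q)) (Vf l m n (rotpt x c1 s1 c2 s2 c3 s3 q)) =
  ip (Vf l m n q) (Vf l m n q).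
Proof.
  intros E1 E2 N2 N3. rewrite (Vf_equiv l m n x c1 s1 c2 s2 c3 s3 q E1 E2 N2 N3).
  set (W := Vf l m n q). subst c1 s1.
  transitivity ((c2 * c2 + s2 * s2) * (c3 * c3 + s3 * s3) * (fst (pz1 W) * fst (pz1 W) + snd (pz1 W) * snd (pz1 W))
     + (c2 * c2 + s2 * s2) * (fst (pz2 W) * fst (pz2 W) + snd (pz2 W) * snd (pz2 W))
     + (c3 * c3 + s3 * s3) * (fst (pz3 W) * fst (pz3 W) + snd (pz3 W) * snd (pz3 W))
     + (px1 W + 0) * (px1 W + 0)).
  - unfold ip, rotpt, xc, mkpt, px1, pz1, pz2, pz3, Re, Im; simpl. ring.
  - rewrite N2, N3. unfold ip, xc, Re, Im. simpl. ring.
Qed.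

Lemma trig_rel p1 p2 :
  cos p1 = cos p2 * cos (- (p1 + p2)) - sin p2 * sin (- (p1 + p2)) /\
  sin p1 = - (sin p2 * cos (- (p1 + p2)) + cos p2 * sin (- (p1 + p2))).
Proof.
  split.
  - rewrite <- cos_plus. replace (p2 + - (p1 + p2)) with (- p1) by ring. rewrite cos_neg. reflexivity.
  - replace (sin p2 * cos (- (p1 + p2)) + cos p2 * sin (- (p1 + p2))) with (sin (p2 + - (p1 + p2)))
      by (rewrite sin_plus; ring).
    replace (p2 + - (p1 + p2)) with (- p1) by ring. rewrite sin_neg. ring.
Qed.

Lemma cs1 p : cos p * cos p + sin p * sin p = 1.
Proof. assert (H := sin2_cos2 p). unfold Rsqr in H. lra. Qed.

Definition R3 := prod_NormedModule R_AbsRing (prod_NormedModule R_AbsRing R_NormedModule R_NormedModule) R_NormedModule.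

Lemma norm_h1 (h : R3) : Rabs (fst (fst h)) <= norm h.
Proof.
  eapply Rle_trans; [|apply (norm_le_prod_norm_1 h)].
  apply (norm_le_prod_norm_1 (fst h)).
Qed.
Lemma norm_h2 (h : R3) : Rabs (snd (fst h)) <= norm h.
Proof.
  eapply Rle_trans; [|apply (norm_le_prod_norm_1 h)].
  apply (norm_le_prod_norm_2 (fst h)).
Qed.
Lemma norm_h3 (h : R3) : Rabs (snd h) <= norm h.
Proof. apply (norm_le_prod_norm_2 h). Qed.

Lemma lin2 (a b : R) : is_linear (U := R3) (V := R_NormedModule)
  (fun h => a * fst (fst h) + b * snd (fst h)).
Proof.
  split.
  - intros x y. unfold plus; simpl. unfold plus; simpl. ring.
  - intros k x. unfold scal; simpl. unfold scal; simpl. unfold mult; simpl. ring.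
  - exists (Rabs a + Rabs b + 1). split. assert (H1 := Rabs_pos a). assert (H2 := Rabs_pos b). lra.
    intros x. unfold norm at 1; simpl. unfold abs; simpl.
    assert (H1 := norm_h1 x). assert (H2 := norm_h2 x). assert (H0 := norm_ge_0 x).
    eapply Rle_trans. apply Rabs_triang. rewrite !Rabs_mult.
    assert (Rabs a * Rabs (fst (fst x)) <= Rabs a * norm x) by (apply Rmult_le_compat_l; auto; apply Rabs_pos).
    assert (Rabs b * Rabs (snd (fst x)) <= Rabs b * norm x) by (apply Rmult_le_compat_l; auto; apply Rabs_pos).
    set (nx := norm x) in *. clearbody nx. eapply Rle_trans. apply Rplus_le_compat; eassumption. lra.
Qed.

Lemma fd_lin2 (a b : R) (u : R * R * R) : filterdiff (fun v : R * R * R => a * fst (fst v) + b * snd (fst v)) (locally u)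
  (fun h : R * R * R => a * fst (fst h) + b * snd (fst h)).
Proof. apply filterdiff_linear, lin2. Qed.

Lemma fd_cos2 (a b : R) (u : R * R * R) :
  filterdiff (fun v : R * R * R => cos (a * fst (fst v) + b * snd (fst v))) (locally u)
   (fun h : R * R * R => (a * fst (fst h) + b * snd (fst h)) * (- sin (a * fst (fst u) + b * snd (fst u)))).
Proof.
  eapply filterdiff_ext_lin.
  apply (filterdiff_comp' (fun v : R * R * R => a * fst (fst v) + b * snd (fst v)) cos u (fun h : R * R * R => a * fst (fst h) + b * snd (fst h)) (fun y : R_NormedModule => scal y (- sin (a * fst (fst u) + b * snd (fst u))))).
  apply fd_lin2. apply is_derive_cos. intros y. reflexivity.
Qed.

Lemma fd_sin2 (a b : R) (u : R * R * R) :
  filterdiff (fun v : R * R * R => sin (a * fst (fst v) + b * snd (fst v))) (locally u)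
   (fun h : R * R * R => (a * fst (fst h) + b * snd (fst h)) * (cos (a * fst (fst u) + b * snd (fst u)))).
Proof.
  eapply filterdiff_ext_lin.
  apply (filterdiff_comp' (fun v : R * R * R => a * fst (fst v) + b * snd (fst v)) sin u (fun h : R * R * R => a * fst (fst h) + b * snd (fst h)) (fun y : R_NormedModule => scal y (cos (a * fst (fst u) + b * snd (fst u))))).
  apply fd_lin2. apply is_derive_sin. intros y. reflexivity.
Qed.

Lemma fd_snd (P : R -> R) dP (u : R * R * R) : is_derive P (snd u) dP ->
  filterdiff (fun v : R * R * R => P (snd v)) (locally u) (fun h : R * R * R => snd h * dP).
Proof.
  intros H. eapply filterdiff_ext_lin.
  apply (filterdiff_comp' (fun v : R * R * R => snd v) P u (fun h : R * R * R => snd h) (fun y : R_NormedModule => scal y dP)).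
  apply filterdiff_linear, is_linear_snd. exact H. intros y. reflexivity.
Qed.

Lemma fd_mult (f g : R * R * R -> R) lf lg (u : R * R * R) : filterdiff f (locally u) lf -> filterdiff g (locally u) lg ->
  filterdiff (fun v => f v * g v) (locally u) (fun h => lf h * g u + f u * lg h).
Proof.
  intros Hf Hg. eapply filterdiff_ext_lin.
  apply (filterdiff_mult_fct (K := R_AbsRing) f g u lf lg). intros; apply Rmult_comm. exact Hf. exact Hg.
  intros y. reflexivity.
Qed.

Lemma fd_plus (f g : R * R * R -> R) lf lg (u : R * R * R) : filterdiff f (locally u) lf -> filterdiff g (locally u) lg ->
  filterdiff (fun v => f v + g v) (locally u) (fun h => lf h + lg h).
Proof.
  intros Hf Hg. eapply filterdiff_ext_lin.
  apply (filterdiff_plus_fct (V := R_NormedModule) f g lf lg). exact Hf. exact Hg.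
  intros y. reflexivity.
Qed.

Lemma fd_minus (f g : R * R * R -> R) lf lg (u : R * R * R) : filterdiff f (locally u) lf -> filterdiff g (locally u) lg ->
  filterdiff (fun v => f v - g v) (locally u) (fun h => lf h - lg h).
Proof.
  intros Hf Hg. eapply filterdiff_ext_lin.
  apply (filterdiff_minus_fct (V := R_NormedModule) f g lf lg). exact Hf. exact Hg.
  intros y. reflexivity.
Qed.

Lemma fd_rot (a b : R) (P Q : R -> R) dP dQ (u : R * R * R) :
  is_derive P (snd u) dP -> is_derive Q (snd u) dQ ->
  filterdiff (fun v : R * R * R =>
     (cos (a * fst (fst v) + b * snd (fst v)) * P (snd v) - sin (a * fst (fst v) + b * snd (fst v)) * Q (snd v),
      cos (a * fst (fst v) + b * snd (fst v)) * Q (snd v) + sin (a * fst (fst v) + b * snd (fst v)) * P (snd v)))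
   (locally u)
   (fun h : R * R * R =>
     ((a * fst (fst h) + b * snd (fst h)) * (- sin (a * fst (fst u) + b * snd (fst u)) * P (snd u)
          - cos (a * fst (fst u) + b * snd (fst u)) * Q (snd u))
      + snd h * (cos (a * fst (fst u) + b * snd (fst u)) * dP - sin (a * fst (fst u) + b * snd (fst u)) * dQ),
      (a * fst (fst h) + b * snd (fst h)) * (- sin (a * fst (fst u) + b * snd (fst u)) * Q (snd u)
          + cos (a * fst (fst u) + b * snd (fst u)) * P (snd u))
      + snd h * (cos (a * fst (fst u) + b * snd (fst u)) * dQ + sin (a * fst (fst u) + b * snd (fst u)) * dP))).
Proof.
  intros HP HQ.
  assert (M1 := fd_minus (fun v : R * R * R => cos (a * fst (fst v) + b * snd (fst v)) * P (snd v))
                     (fun v : R * R * R => sin (a * fst (fst v) + b * snd (fst v)) * Q (snd v)) _ _ u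
    (fd_mult (fun v : R * R * R => cos (a * fst (fst v) + b * snd (fst v))) (fun v : R * R * R => P (snd v)) _ _ u
       (fd_cos2 a b u) (fd_snd P dP u HP))
    (fd_mult (fun v : R * R * R => sin (a * fst (fst v) + b * snd (fst v))) (fun v : R * R * R => Q (snd v)) _ _ u
       (fd_sin2 a b u) (fd_snd Q dQ u HQ))).
  assert (M2 := fd_plus (fun v : R * R * R => cos (a * fst (fst v) + b * snd (fst v)) * Q (snd v))
                     (fun v : R * R * R => sin (a * fst (fst v) + b * snd (fst v)) * P (snd v)) _ _ u
    (fd_mult (fun v : R * R * R => cos (a * fst (fst v) + b * snd (fst v))) (fun v : R * R * R => Q (snd v)) _ _ u
       (fd_cos2 a b u) (fd_snd Q dQ u HQ))
    (fd_mult (fun v : R * R * R => sin (a * fst (fst v) + b * snd (fst v))) (fun v : R * R * R => P (snd v)) _ _ u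
       (fd_sin2 a b u) (fd_snd P dP u HP))).
  assert (HD := fd_pair _ _ u _ _ M1 M2).
  eapply filterdiff_ext_lin. exact HD.
  intros h. apply injective_projections; simpl; ring.
Qed.


Lemma cont_fst {U V : UniformSpace} (x : U * V) : continuous (fun q : U * V => fst q) x.
Proof. destruct x. apply continuous_fst. Qed.
Lemma cont_snd {U V : UniformSpace} (x : U * V) : continuous (fun q : U * V => snd q) x.
Proof. destruct x. apply continuous_snd. Qed.
Lemma cont_pair {T U V : UniformSpace} (f : T -> U) (g : T -> V) x :
  continuous f x -> continuous g x -> continuous (fun q => (f q, g q)) x.
Proof.
  intros Hf Hg. apply (continuous_comp_2 f g (fun a b => (a, b)) x Hf Hg).
  eapply continuous_ext; [|apply continuous_id]. intros z. simpl. destruct z; reflexivity.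
Qed.

Ltac ctac :=
  match goal with
  | |- continuous (fun q => ?a) _ => apply continuous_const
  | |- continuous (fun q => q) _ => apply continuous_id
  | |- continuous (fun q => (@?f q, @?g q)) ?x => apply (cont_pair f g x); ctac
  | |- continuous (fun q => @?f q + @?g q) ?x => apply (continuous_plus (V := R_NormedModule) f g x); ctac
  | |- continuous (fun q => @?f q - @?g q) ?x => apply (continuous_minus (V := R_NormedModule) f g x); ctac
  | |- continuous (fun q => @?f q * @?g q) ?x => apply (continuous_mult (K := R_AbsRing) f g x); ctac
  | |- continuous (fun q => - @?f q) ?x => apply (continuous_opp (V := R_NormedModule) f x); ctac
  | |- continuous (fun q => fst (@?f q)) ?x => apply (continuous_comp f fst x); [ctac | apply cont_fst]
  | |- continuous (fun q => snd (@?f q)) ?x => apply (continuous_comp f snd x); [ctac | apply cont_snd]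
  | _ => idtac
  end.

Section Geo.
Variables (lam mu nu a0 eps : R) (y : R -> St).
Variables (b1c b1a b1b b2c b2a b2b k : R).
Hypothesis Heps : 0 < eps.
Hypothesis Hyd : forall t i, -eps < t < eps -> is_derive (fun s => y s i) t (Fv lam mu nu (y t) i).
Hypothesis Hb1 : lam * b1c + mu * b1a + nu * b1b = 0.
Hypothesis Hb2 : lam * b2c + mu * b2a + nu * b2b = 0.
Hypothesis Hc1 : b1a * b2b - b1b * b2a = k * lam.
Hypothesis Hc2 : b1b * b2c - b1c * b2b = k * mu.
Hypothesis Hc3 : b1c * b2a - b1a * b2c = k * nu.
Hypothesis Hk : k <> 0.
Hypothesis Hspan : forall c a1 a2, lam * c + mu * a1 + nu * a2 = 0 -> exists s1 s2,
  c = b1c * s1 + b2c * s2 /\ a1 = b1a * s1 + b2a * s2 /\ a2 = b1b * s1 + b2b * s2.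

Definition z1f (t : R) : C := (y t 0%nat, y t 1%nat).
Definition z2f (t : R) : C := (y t 2%nat, y t 3%nat).
Definition z3f (t : R) : C := (y t 4%nat, y t 5%nat).
Definition curve (t : R) : pt := mkpt a0 (z1f t) (z2f t) (z3f t).

Hypothesis HV : forall t, -eps < t < eps -> 0 < ip (Vf lam mu nu (curve t)) (Vf lam mu nu (curve t)).

Definition fchart (u : R * R * R) : pt :=
  act (b1c * fst (fst u) + b2c * snd (fst u)) (b1a * fst (fst u) + b2a * snd (fst u))
      (b1b * fst (fst u) + b2b * snd (fst u)) (curve (snd u)).

Definition DF (q : pt) (h : R * R * R) : pt :=
  mkpt (b1c * fst (fst h) + b2c * snd (fst h) + snd h * px1 (Vf lam mu nu q))
    (- (b1a * fst (fst h) + b2a * snd (fst h)) * snd (pz1 q) + snd h * fst (pz1 (Vf lam mu nu q)),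
       (b1a * fst (fst h) + b2a * snd (fst h)) * fst (pz1 q) + snd h * snd (pz1 (Vf lam mu nu q)))
    (- (b1b * fst (fst h) + b2b * snd (fst h)) * snd (pz2 q) + snd h * fst (pz2 (Vf lam mu nu q)),
       (b1b * fst (fst h) + b2b * snd (fst h)) * fst (pz2 q) + snd h * snd (pz2 (Vf lam mu nu q)))
    ((b1a * fst (fst h) + b2a * snd (fst h) + (b1b * fst (fst h) + b2b * snd (fst h))) * snd (pz3 q)
       + snd h * fst (pz3 (Vf lam mu nu q)),
     - (b1a * fst (fst h) + b2a * snd (fst h) + (b1b * fst (fst h) + b2b * snd (fst h))) * fst (pz3 q)
       + snd h * snd (pz3 (Vf lam mu nu q))).

Lemma DF_X q h1 h2 : DF q ((h1, h2), 0) =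
  Xf (b1c * h1 + b2c * h2) (b1a * h1 + b2a * h2) (b1b * h1 + b2b * h2) q.
Proof. apply pt_eq; unfold DF, Xf; unf; ring. Qed.

Lemma DF_V q : DF q ((0, 0), 1) = Vf lam mu nu q.
Proof. apply pt_eq; unfold DF, Xf; unf; ring. Qed.

Lemma ip_DF_V q h : ip (DF q h) (Vf lam mu nu q) = snd h * ip (Vf lam mu nu q) (Vf lam mu nu q).
Proof.
  destruct q as [[[x [p1 r1]] [p2 r2]] [p3 r3]]. destruct h as [[h1 h2] h3].
  unfold DF. unf. ring.
Qed.

Lemma fchart_rot u : fchart u = rotpt (b1c * fst (fst u) + b2c * snd (fst u))
   (cos (b1a * fst (fst u) + b2a * snd (fst u))) (sin (b1a * fst (fst u) + b2a * snd (fst u)))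
   (cos (b1b * fst (fst u) + b2b * snd (fst u))) (sin (b1b * fst (fst u) + b2b * snd (fst u)))
   (cos (- (b1a * fst (fst u) + b2a * snd (fst u) + (b1b * fst (fst u) + b2b * snd (fst u)))))
   (sin (- (b1a * fst (fst u) + b2a * snd (fst u) + (b1b * fst (fst u) + b2b * snd (fst u)))))
   (curve (snd u)).
Proof. unfold fchart. apply act_rot. Qed.

Lemma ipV_fchart u : ip (Vf lam mu nu (fchart u)) (Vf lam mu nu (fchart u)) =
  ip (Vf lam mu nu (curve (snd u))) (Vf lam mu nu (curve (snd u))).
Proof.
  rewrite fchart_rot. destruct (trig_rel (b1a * fst (fst u) + b2a * snd (fst u)) (b1b * fst (fst u) + b2b * snd (fst u))) as [T1 T2].
  apply ipV_rot; auto; apply cs1.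
Qed.

Lemma fchart_fd u : -eps < snd u < eps -> filterdiff fchart (locally u) (DF (fchart u)).
Proof.
  intros Ht.
  assert (E : forall v : R * R * R, - (b1a * fst (fst v) + b2a * snd (fst v) + (b1b * fst (fst v) + b2b * snd (fst v)))
     = (- (b1a + b1b)) * fst (fst v) + (- (b2a + b2b)) * snd (fst v)) by (intros; ring).
  pose (g := fun v : R * R * R =>
    (((a0 + (b1c * fst (fst v) + b2c * snd (fst v)),
      (cos (b1a * fst (fst v) + b2a * snd (fst v)) * y (snd v) 0%nat - sin (b1a * fst (fst v) + b2a * snd (fst v)) * y (snd v) 1%nat,
       cos (b1a * fst (fst v) + b2a * snd (fst v)) * y (snd v) 1%nat + sin (b1a * fst (fst v) + b2a * snd (fst v)) * y (snd v) 0%nat)),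
      (cos (b1b * fst (fst v) + b2b * snd (fst v)) * y (snd v) 2%nat - sin (b1b * fst (fst v) + b2b * snd (fst v)) * y (snd v) 3%nat,
       cos (b1b * fst (fst v) + b2b * snd (fst v)) * y (snd v) 3%nat + sin (b1b * fst (fst v) + b2b * snd (fst v)) * y (snd v) 2%nat)),
      (cos ((- (b1a + b1b)) * fst (fst v) + (- (b2a + b2b)) * snd (fst v)) * y (snd v) 4%nat
         - sin ((- (b1a + b1b)) * fst (fst v) + (- (b2a + b2b)) * snd (fst v)) * y (snd v) 5%nat,
       cos ((- (b1a + b1b)) * fst (fst v) + (- (b2a + b2b)) * snd (fst v)) * y (snd v) 5%nat
         + sin ((- (b1a + b1b)) * fst (fst v) + (- (b2a + b2b)) * snd (fst v)) * y (snd v) 4%nat))).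
  apply (filterdiff_ext g fchart).
  { intros v. unfold g. rewrite fchart_rot. apply pt_eq; unfold rotpt, curve, z1f, z2f, z3f; unf; try reflexivity;
    repeat f_equal; ring. }
  assert (Hx : filterdiff (fun v : R3 => a0 + (b1c * fst (fst v) + b2c * snd (fst v))) (locally u)
      (fun h : R3 => 0 + (b1c * fst (fst h) + b2c * snd (fst h)))).
  { apply (fd_plus (fun _ => a0) (fun v : R3 => b1c * fst (fst v) + b2c * snd (fst v))).
    apply (filterdiff_const (V := R_NormedModule) a0). apply fd_lin2. }
  set (t := snd u) in *.
  assert (H1 := fd_rot b1a b2a (fun s => y s 0%nat) (fun s => y s 1%nat) _ _ u (Hyd t 0 Ht) (Hyd t 1 Ht)).
  assert (H2 := fd_rot b1b b2b (fun s => y s 2%nat) (fun s => y s 3%nat) _ _ u (Hyd t 2 Ht) (Hyd t 3 Ht)).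
  assert (H3 := fd_rot (- (b1a + b1b)) (- (b2a + b2b)) (fun s => y s 4%nat) (fun s => y s 5%nat) _ _ u (Hyd t 4 Ht) (Hyd t 5 Ht)).
  assert (HD := fd_pair _ _ u _ _ (fd_pair _ _ u _ _ (fd_pair _ _ u _ _ Hx H1) H2) H3).
  eapply filterdiff_ext_lin.
  - exact HD.
  - intros h. rewrite fchart_rot.
    destruct (trig_rel (b1a * fst (fst u) + b2a * snd (fst u)) (b1b * fst (fst u) + b2b * snd (fst u))) as [T1 T2].
    unfold DF. rewrite (Vf_equiv _ _ _ _ _ _ _ _ _ _ _ T1 T2 (cs1 _) (cs1 _)).
    rewrite <- (E u). unfold t.
    destruct h as [[h1 h2] h3].
    apply pt_eq; unfold rotpt, curve, z1f, z2f, z3f; unf; ring.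
Qed.

Definition Uset (u : R * R * R) : Prop := - eps < snd u < eps.

Lemma Uset_open : open (T := prod_UniformSpace (prod_UniformSpace R_UniformSpace R_UniformSpace) R_UniformSpace) Uset.
Proof.
  intros [u0 t] Hu. unfold Uset in Hu. simpl in Hu.
  assert (Hr : 0 < Rmin (eps - t) (eps + t)) by (apply Rmin_pos; lra).
  exists (mkposreal _ Hr). intros [v0 t'] [_ Hv]. apply ballR1 in Hv. simpl in Hv.
  assert (Hs1 := Rmin_l (eps - t) (eps + t)). assert (Hs2 := Rmin_r (eps - t) (eps + t)).
  unfold Uset. simpl. split_Rabs; lra.
Qed.

Lemma DF_cont (q0 : pt) h : continuous (fun q => DF q h) q0.
Proof.
  unfold DF, Vf, Fv, comp, coords, mkpt, px1, pz1, pz2, pz3. simpl. ctac.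
Qed.

Definition CNM := prod_NormedModule R_AbsRing R_NormedModule R_NormedModule.
Definition PtNM := prod_NormedModule R_AbsRing (prod_NormedModule R_AbsRing (prod_NormedModule R_AbsRing R_NormedModule CNM) CNM) CNM.

Lemma DFf_cont u h : Uset u -> continuous (fun u' => DF (fchart u') h) u.
Proof.
  intros Hu.
  assert (H1 : continuous (T := NormedModule.UniformSpace _ R3) (U := NormedModule.UniformSpace _ PtNM) fchart u)
    by exact (filterdiff_continuous (K := R_AbsRing) (U := R3) (V := PtNM) fchart u (ex_intro _ _ (fchart_fd u Hu))).
  assert (H2 : continuous (T := NormedModule.UniformSpace _ PtNM) (fun q => DF q h) (fchart u)) by exact (DF_cont _ h).
  exact (continuous_comp fchart (fun q => DF q h) u H1 H2).
Qed.

Lemma W_pos u : Uset u -> 0 < ip (Vf lam mu nu (fchart u)) (Vf lam mu nu (fchart u)).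
Proof. intros Hu. rewrite ipV_fchart. apply HV. exact Hu. Qed.

Lemma ip_zero_l v : ip (((0, (0, 0)), (0, 0)), (0, 0)) v = 0.
Proof. unfold ip, xc, px1, pz1, pz2, pz3, Re, Im; simpl. ring. Qed.

Lemma gram2_zero_l v : gram2 (((0, (0, 0)), (0, 0)), (0, 0)) v = 0.
Proof. unfold gram2. rewrite ip_zero_l. unfold ip, xc, px1, pz1, pz2, pz3, Re, Im; simpl. ring. Qed.

Lemma gram2_zero_r v : gram2 v (((0, (0, 0)), (0, 0)), (0, 0)) = 0.
Proof. unfold gram2, ip, xc, px1, pz1, pz2, pz3, Re, Im; simpl. ring. Qed.

Lemma DF_inj u h : Uset u -> DF (fchart u) h = zero -> h = zero.
Proof.
  intros Hu Hz. set (q := fchart u) in *.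
  assert (HW := W_pos u Hu). fold q in HW.
  set (W := ip (Vf lam mu nu q) (Vf lam mu nu q)) in *.
  change (zero : pt) with ((((0, (0, 0)), (0, 0)), (0, 0)) : pt) in Hz.
  assert (H3 : snd h = 0).
  { assert (E := ip_DF_V q h). rewrite Hz, ip_zero_l in E. fold W in E.
    symmetry in E. apply Rmult_integral in E. destruct E; auto. lra. }
  destruct h as [[h1 h2] h3]. simpl in H3. subst h3.
  rewrite DF_X in Hz.
  assert (G1 := I3 (b1c * h1 + b2c * h2) (b1a * h1 + b2a * h2) (b1b * h1 + b2b * h2) b2c b2a b2b q).
  rewrite Hz, gram2_zero_l in G1.
  assert (E1 : (b1a * h1 + b2a * h2) * b2b - (b1b * h1 + b2b * h2) * b2a = h1 * k * lam)
    by (rewrite (Rmult_assoc h1 k lam), <- Hc1; ring).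
  assert (E2 : (b1b * h1 + b2b * h2) * b2c - (b1c * h1 + b2c * h2) * b2b = h1 * k * mu)
    by (rewrite (Rmult_assoc h1 k mu), <- Hc2; ring).
  assert (E3 : (b1c * h1 + b2c * h2) * b2a - (b1a * h1 + b2a * h2) * b2c = h1 * k * nu)
    by (rewrite (Rmult_assoc h1 k nu), <- Hc3; ring).
  rewrite E1, E2, E3, VV_scale in G1. fold W in G1.
  assert (G2 := I3 b1c b1a b1b (b1c * h1 + b2c * h2) (b1a * h1 + b2a * h2) (b1b * h1 + b2b * h2) q).
  rewrite Hz, gram2_zero_r in G2.
  assert (F1 : b1a * (b1b * h1 + b2b * h2) - b1b * (b1a * h1 + b2a * h2) = h2 * k * lam)
    by (rewrite (Rmult_assoc h2 k lam), <- Hc1; ring).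
  assert (F2 : b1b * (b1c * h1 + b2c * h2) - b1c * (b1b * h1 + b2b * h2) = h2 * k * mu)
    by (rewrite (Rmult_assoc h2 k mu), <- Hc2; ring).
  assert (F3 : b1c * (b1a * h1 + b2a * h2) - b1a * (b1c * h1 + b2c * h2) = h2 * k * nu)
    by (rewrite (Rmult_assoc h2 k nu), <- Hc3; ring).
  rewrite F1, F2, F3, VV_scale in G2. fold W in G2.
  assert (h1 = 0).
  { assert (h1 * k * (h1 * k) = 0).
    { apply (Rmult_eq_reg_r W). lra. lra. }
    apply Rmult_integral in H. destruct H as [H|H]; apply Rmult_integral in H; destruct H; auto; contradiction. }
  assert (h2 = 0).
  { assert (h2 * k * (h2 * k) = 0).
    { apply (Rmult_eq_reg_r W). lra. lra. }
    apply Rmult_integral in H0. destruct H0 as [H0|H0]; apply Rmult_integral in H0; destruct H0; auto; contradiction. }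
  subst. reflexivity.
Qed.

Definition sgn : R := if Rle_dec 0 k then 1 else -1.

Lemma DF_e1 q : DF q e1 = Xf b1c b1a b1b q.
Proof. apply pt_eq; unfold DF, Xf, e1; unf; ring. Qed.
Lemma DF_e2 q : DF q e2 = Xf b2c b2a b2b q.
Proof. apply pt_eq; unfold DF, Xf, e2; unf; ring. Qed.
Lemma DF_e3 q : DF q e3 = Vf lam mu nu q.
Proof. apply pt_eq; unfold DF, Xf, e3; unf; ring. Qed.

Lemma DF_assoc u : Uset u ->
  phi0 (DF (fchart u) e1) (DF (fchart u) e2) (DF (fchart u) e3)
  = vol3 sgn (DF (fchart u) e1) (DF (fchart u) e2) (DF (fchart u) e3).
Proof.
  intros Hu. set (q := fchart u) in *.
  assert (HW := W_pos u Hu). fold q in HW.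
  rewrite DF_e1, DF_e2, DF_e3.
  unfold vol3.
  rewrite I4 by apply I1.
  rewrite I2, I3, Hc1, Hc2, Hc3, VV_scale, VW_scale.
  set (W := ip (Vf lam mu nu q) (Vf lam mu nu q)) in *.
  replace (k * k * W * W) with ((Rabs k * W) * (Rabs k * W)).
  2:{ destruct (Rcase_abs k). rewrite Rabs_left by auto. ring. rewrite Rabs_right by auto. ring. }
  rewrite sqrt_square. 2:{ apply Rmult_le_pos. apply Rabs_pos. lra. }
  unfold sgn. destruct (Rle_dec 0 k).
  - rewrite Rabs_right by lra. ring.
  - rewrite Rabs_left by lra. ring.
Qed.

Lemma Mset_iff p : Mset lam mu nu eps (fun _ => a0) z1f z2f z3f p <-> exists u, Uset u /\ fchart u = p.
Proof.
  split.
  - intros (t & c & p1 & p2 & Ht & HG & Hp).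
    destruct (Hspan c p1 p2 HG) as (s1 & s2 & Ec & E1 & E2).
    exists ((s1, s2), t). split. exact Ht.
    subst. reflexivity.
  - intros (u & Hu & Hp).
    exists (snd u), (b1c * fst (fst u) + b2c * snd (fst u)), (b1a * fst (fst u) + b2a * snd (fst u)),
      (b1b * fst (fst u) + b2b * snd (fst u)).
    split. exact Hu. split.
    + unfold inG.
      transitivity (fst (fst u) * (lam * b1c + mu * b1a + nu * b1b) + snd (fst u) * (lam * b2c + mu * b2a + nu * b2b)).
      ring. rewrite Hb1, Hb2. ring.
    + rewrite <- Hp. reflexivity.
Qed.

Lemma geo_main : associative_3fold (Mset lam mu nu eps (fun _ => a0) z1f z2f z3f).
Proof.
  exists Uset, fchart, (fun u h => DF (fchart u) h), (fun _ => sgn).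
  split. apply Uset_open.
  split. apply Mset_iff.
  split. intros u Hu. apply fchart_fd. exact Hu.
  split. intros u h Hu. apply DFf_cont. exact Hu.
  split. intros u h Hu. apply DF_inj. exact Hu.
  split. intros u _. unfold sgn. destruct (Rle_dec 0 k); auto.
  split. intros u _. apply continuous_const.
  intros u Hu. apply DF_assoc. exact Hu.
Qed.

End Geo.

Lemma basis lam mu nu : ~ (lam = 0 /\ mu = 0 /\ nu = 0) ->
  exists b1c b1a b1b b2c b2a b2b k,
    lam * b1c + mu * b1a + nu * b1b = 0 /\ lam * b2c + mu * b2a + nu * b2b = 0 /\
    b1a * b2b - b1b * b2a = k * lam /\ b1b * b2c - b1c * b2b = k * mu /\
    b1c * b2a - b1a * b2c = k * nu /\ k <> 0 /\
    (forall c a1 a2, lam * c + mu * a1 + nu * a2 = 0 -> exists s1 s2,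
      c = b1c * s1 + b2c * s2 /\ a1 = b1a * s1 + b2a * s2 /\ a2 = b1b * s1 + b2b * s2).
Proof.
  intros Hn. destruct (Req_dec lam 0) as [Hl|Hl].
  - subst lam. exists 1, 0, 0, 0, nu, (- mu), 1.
    repeat split; try ring.
    + lra.
    + intros c a1 a2 H. destruct (Req_dec nu 0) as [Hnu|Hnu].
      * subst nu. assert (mu <> 0) by tauto.
        assert (a1 = 0). { apply (Rmult_eq_reg_l mu). lra. auto. }
        exists c, (- a2 / mu). repeat split; try field; auto. subst a1. field; auto.
      * exists c, (a1 / nu). repeat split; try field; auto.
        apply (Rmult_eq_reg_l nu); auto. field_simplify; auto. lra.
  - exists mu, (- lam), 0, nu, 0, (- lam), lam.
    repeat split; try ring. auto.
    intros c a1 a2 H. exists (- a1 / lam), (- a2 / lam). repeat split; try field; auto.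
    apply (Rmult_eq_reg_l lam); auto. field_simplify; auto. lra.
Qed.

Lemma sumsq7 a1 a2 a3 a4 a5 a6 a7 :
  a1 * a1 + a2 * a2 + a3 * a3 + a4 * a4 + a5 * a5 + a6 * a6 + a7 * a7 = 0 ->
  a1 = 0 /\ a2 = 0 /\ a3 = 0 /\ a4 = 0 /\ a5 = 0 /\ a6 = 0 /\ a7 = 0.
Proof.
  intros H.
  assert (H1 := Rle_0_sqr a1). assert (H2 := Rle_0_sqr a2). assert (H3 := Rle_0_sqr a3).
  assert (H4 := Rle_0_sqr a4). assert (H5 := Rle_0_sqr a5). assert (H6 := Rle_0_sqr a6).
  assert (H7 := Rle_0_sqr a7). unfold Rsqr in *.
  repeat split; apply Rsqr_0_uniq; unfold Rsqr; lra.
Qed.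

Lemma dep (X Y : pt) : gram2 X Y = 0 -> exists al be, (al <> 0 \/ be <> 0) /\
  forall i, (1 <= i <= 7)%nat -> al * xc i X + be * xc i Y = 0.
Proof.
  intros G. destruct (Req_dec (ip X X) 0) as [HX|HX].
  - exists 1, 0. split. left; lra.
    unfold ip in HX. destruct (sumsq7 _ _ _ _ _ _ _ HX) as (E1 & E2 & E3 & E4 & E5 & E6 & E7).
    intros i Hi. destruct i as [|[|[|[|[|[|[|[|i]]]]]]]]; try lia.
    1-7: first [rewrite E1|rewrite E2|rewrite E3|rewrite E4|rewrite E5|rewrite E6|rewrite E7]; ring.
  - exists (ip X Y), (- ip X X). split. right. lra.
    assert (S : (ip X Y * xc 1 X + - ip X X * xc 1 Y) * (ip X Y * xc 1 X + - ip X X * xc 1 Y)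
      + (ip X Y * xc 2 X + - ip X X * xc 2 Y) * (ip X Y * xc 2 X + - ip X X * xc 2 Y)
      + (ip X Y * xc 3 X + - ip X X * xc 3 Y) * (ip X Y * xc 3 X + - ip X X * xc 3 Y)
      + (ip X Y * xc 4 X + - ip X X * xc 4 Y) * (ip X Y * xc 4 X + - ip X X * xc 4 Y)
      + (ip X Y * xc 5 X + - ip X X * xc 5 Y) * (ip X Y * xc 5 X + - ip X X * xc 5 Y)
      + (ip X Y * xc 6 X + - ip X X * xc 6 Y) * (ip X Y * xc 6 X + - ip X X * xc 6 Y)
      + (ip X Y * xc 7 X + - ip X X * xc 7 Y) * (ip X Y * xc 7 X + - ip X X * xc 7 Y) = 0).
    { transitivity (ip X X * gram2 X Y). unfold gram2, ip. ring.
      rewrite G. ring. }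
    destruct (sumsq7 _ _ _ _ _ _ _ S) as (E1 & E2 & E3 & E4 & E5 & E6 & E7).
    intros i Hi. destruct i as [|[|[|[|[|[|[|[|i]]]]]]]]; try lia; auto.
Qed.

Lemma kill_al (x k lam mu nu : R) : x * (k * lam) = 0 -> x * (k * mu) = 0 -> x * (k * nu) = 0 ->
  k <> 0 -> ~ (lam = 0 /\ mu = 0 /\ nu = 0) -> x = 0.
Proof.
  intros H1 H2 H3 Hk Hn. destruct (Req_dec x 0) as [|Hx]; auto. exfalso. apply Hn.
  repeat split.
  - apply Rmult_integral in H1. destruct H1 as [|H1]; [contradiction|]. apply Rmult_integral in H1. tauto.
  - apply Rmult_integral in H2. destruct H2 as [|H2]; [contradiction|]. apply Rmult_integral in H2. tauto.
  - apply Rmult_integral in H3. destruct H3 as [|H3]; [contradiction|]. apply Rmult_integral in H3. tauto.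
Qed.

Theorem theorem6p2 (lam mu nu : R) (a0 : R) (w1 w2 w3 : C) :
  ~ (lam = 0 /\ mu = 0 /\ nu = 0) ->
  orbit_dim2 lam mu nu (mkpt a0 w1 w2 w3) ->
  (exists eps : R, 0 < eps /\
    exists (x1 : R -> R) (z1 z2 z3 : R -> C),
      is_solution lam mu nu (- eps) eps x1 z1 z2 z3 /\
      x1 0 = a0 /\ z1 0 = w1 /\ z2 0 = w2 /\ z3 0 = w3 /\
      associative_3fold (Mset lam mu nu eps x1 z1 z2 z3) /\
      ((mu <> 0 \/ nu <> 0) ->
         forall x : R, ~ (forall p, Mset lam mu nu eps x1 z1 z2 z3 p -> px1 p = x)) /\
      exists A : R, forall t, - eps < t < eps -> Im (z1 t * z2 t * z3 t)%C = A)
  /\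
  (forall (a b : R) (x1 : R -> R) (z1 z2 z3 : R -> C),
     is_solution lam mu nu a b x1 z1 z2 z3 ->
     exists A : R, forall t, a < t < b -> Im (z1 t * z2 t * z3 t)%C = A).
Proof.
  intros Hn Horb.
  assert (Part2 : forall (a b : R) (x1 : R -> R) (z1 z2 z3 : R -> C),
     is_solution lam mu nu a b x1 z1 z2 z3 ->
     exists A : R, forall t, a < t < b -> Im (z1 t * z2 t * z3 t)%C = A).
  { intros a b x1 z1 z2 z3 Hs. apply const_on_interval. intros t Ht.
    destruct (Hs t Ht) as (_ & H1 & H2 & H3). exact (conserved lam mu nu z1 z2 z3 t H1 H2 H3). }
  split; [|exact Part2].
  set (wv := fun i : nat => match i with 0 => fst w1 | 1 => snd w1 | 2 => fst w2 | 3 => snd w2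
                         | 4 => fst w3 | 5 => snd w3 | _ => 0 end).
  set (y := ysol lam mu nu wv). set (e0 := epsc lam mu nu wv).
  assert (He0 : 0 < e0) by apply epsc_pos.
  destruct (basis _ _ _ Hn) as (b1c & b1a & b1b & b2c & b2a & b2b & k & Hb1 & Hb2 & Hc1 & Hc2 & Hc3 & Hk & Hspan).
  set (Wf := fun t => ip (Vf lam mu nu (curve a0 y t)) (Vf lam mu nu (curve a0 y t))).
  assert (Hcurve0 : curve a0 y 0 = mkpt a0 w1 w2 w3).
  { unfold curve, z1f, z2f, z3f, y. rewrite !ysol_0. destruct w1, w2, w3. reflexivity. }
  assert (HW0 : 0 < Wf 0).
  { set (q0 := mkpt a0 w1 w2 w3) in *.
    assert (Hge : 0 <= Wf 0).
    { unfold Wf. set (V0 := Vf lam mu nu (curve a0 y 0)). unfold ip.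
      assert (H1 := Rle_0_sqr (xc 1 V0)). assert (H2 := Rle_0_sqr (xc 2 V0)). assert (H3 := Rle_0_sqr (xc 3 V0)).
      assert (H4 := Rle_0_sqr (xc 4 V0)). assert (H5 := Rle_0_sqr (xc 5 V0)). assert (H6 := Rle_0_sqr (xc 6 V0)).
      assert (H7 := Rle_0_sqr (xc 7 V0)). unfold Rsqr in *. lra. }
    destruct Hge as [|H0]; auto. exfalso.
    unfold Wf in H0. rewrite Hcurve0 in H0. fold q0 in H0.
    assert (G := I3 b1c b1a b1b b2c b2a b2b q0).
    rewrite Hc1, Hc2, Hc3, VV_scale, <- H0 in G.
    assert (G' : gram2 (Xf b1c b1a b1b q0) (Xf b2c b2a b2b q0) = 0) by (rewrite G; ring).
    destruct (dep _ _ G') as (al & be & Hab & Hi).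
    set (c := al * b1c + be * b2c). set (a1 := al * b1a + be * b2a). set (a2 := al * b1b + be * b2b).
    assert (Ec : c = 0).
    { transitivity (al * xc 1 (Xf b1c b1a b1b q0) + be * xc 1 (Xf b2c b2a b2b q0)).
      unfold c, Xf, xc, mkpt, px1; simpl; ring. apply Hi; lia. }
    assert (HC : forall (i j : nat) (z : C), (1 <= i <= 7)%nat -> (1 <= j <= 7)%nat ->
        fst z = al * xc i (Xf b1c b1a b1b q0) + be * xc i (Xf b2c b2a b2b q0) ->
        snd z = al * xc j (Xf b1c b1a b1b q0) + be * xc j (Xf b2c b2a b2b q0) -> z = RtoC 0).
    { intros i j z Hi1 Hj1 Ez1 Ez2. apply C_ext; simpl. rewrite Ez1; apply Hi; auto. rewrite Ez2; apply Hi; auto. }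
    destruct (Horb c a1 a2) as [Ha1 Ha2].
    - unfold inG, c, a1, a2.
      transitivity (al * (lam * b1c + mu * b1a + nu * b1b) + be * (lam * b2c + mu * b2a + nu * b2b)).
      ring. rewrite Hb1, Hb2. ring.
    - exact Ec.
    - apply (HC 2%nat 3%nat); try lia; unfold q0, a1, Xf, xc, mkpt, pz1, Re, Im; destruct w1; simpl; ring.
    - apply (HC 4%nat 5%nat); try lia; unfold q0, a2, Xf, xc, mkpt, pz2, Re, Im; destruct w2; simpl; ring.
    - apply (HC 6%nat 7%nat); try lia; unfold q0, a1, a2, Xf, xc, mkpt, pz3, Re, Im; destruct w3; simpl; ring.
    - assert (Hal : al = 0).
      { apply (kill_al al k lam mu nu); auto.
        + rewrite <- Hc1. transitivity (a1 * b2b - a2 * b2a). unfold a1, a2; ring. rewrite Ha1, Ha2; ring.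
        + rewrite <- Hc2. transitivity (a2 * b2c - c * b2b). unfold a2, c; ring. rewrite Ha2, Ec; ring.
        + rewrite <- Hc3. transitivity (c * b2a - a1 * b2c). unfold c, a1; ring. rewrite Ec, Ha1; ring. }
      assert (Hbe : be = 0).
      { apply (kill_al be k lam mu nu); auto.
        + rewrite <- Hc1. transitivity (b1a * a2 - b1b * a1). unfold a1, a2; ring. rewrite Ha1, Ha2; ring.
        + rewrite <- Hc2. transitivity (b1b * c - b1c * a2). unfold a2, c; ring. rewrite Ha2, Ec; ring.
        + rewrite <- Hc3. transitivity (b1c * a1 - b1a * c). unfold c, a1; ring. rewrite Ec, Ha1; ring. }
      destruct Hab; contradiction. }
  assert (Hcont : continuous Wf 0).
  { unfold Wf, ip, Vf, Fv, comp, coords, curve, z1f, z2f, z3f, xc, mkpt, px1, pz1, pz2, pz3, Re, Im. simpl.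
    ctac. all: apply ysol_cont. }
  assert (Hd : 0 < Wf 0 / 2) by lra.
  destruct (proj1 (filterlim_locally Wf (Wf 0)) Hcont (mkposreal _ Hd)) as [d Hdd].
  set (eps := Rmin e0 d).
  assert (Heps : 0 < eps) by (apply Rmin_pos; auto; apply cond_pos).
  assert (He1 := Rmin_l e0 d). assert (He2 := Rmin_r e0 d). fold eps in He1, He2.
  assert (Hyd : forall t i, - eps < t < eps -> is_derive (fun s => y s i) t (Fv lam mu nu (y t) i)).
  { intros t i Ht. apply ysol_deriv. fold e0. lra. }
  assert (HV : forall t, - eps < t < eps -> 0 < Wf t).
  { intros t Ht. assert (Hb : ball 0 d t). { apply ballR2. split_Rabs; lra. }
    specialize (Hdd t Hb). apply ballR1 in Hdd. simpl in Hdd. split_Rabs; lra. }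
  assert (Hsol : is_solution lam mu nu (- eps) eps (fun _ => a0) (z1f y) (z2f y) (z3f y)).
  { intros t Ht. split; [|split; [|split]].
    - exact (is_derive_const (V := R_NormedModule) a0 t).
    - assert (D := D_pair _ _ t _ _ (Hyd t 0%nat Ht) (Hyd t 1%nat Ht)).
      match goal with |- is_derive _ _ ?v => replace v with ((Fv lam mu nu (y t) 0%nat, Fv lam mu nu (y t) 1%nat) : C) end.
      exact D. apply C_ext; unfold z1f, z2f, z3f, Fv, comp; simpl; ring.
    - assert (D := D_pair _ _ t _ _ (Hyd t 2%nat Ht) (Hyd t 3%nat Ht)).
      match goal with |- is_derive _ _ ?v => replace v with ((Fv lam mu nu (y t) 2%nat, Fv lam mu nu (y t) 3%nat) : C) end.
      exact D. apply C_ext; unfold z1f, z2f, z3f, Fv, comp; simpl; ring.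
    - assert (D := D_pair _ _ t _ _ (Hyd t 4%nat Ht) (Hyd t 5%nat Ht)).
      match goal with |- is_derive _ _ ?v => replace v with ((Fv lam mu nu (y t) 4%nat, Fv lam mu nu (y t) 5%nat) : C) end.
      exact D. apply C_ext; unfold z1f, z2f, z3f, Fv, comp; simpl; ring. }
  exists eps. split. exact Heps.
  exists (fun _ => a0), (z1f y), (z2f y), (z3f y).
  split. exact Hsol.
  split. reflexivity.
  split. { unfold z1f, y. rewrite !ysol_0. destruct w1; reflexivity. }
  split. { unfold z2f, y. rewrite !ysol_0. destruct w2; reflexivity. }
  split. { unfold z3f, y. rewrite !ysol_0. destruct w3; reflexivity. }
  split. { apply (geo_main lam mu nu a0 eps y b1c b1a b1b b2c b2a b2b k Hyd Hb1 Hb2 Hc1 Hc2 Hc3 Hk Hspan HV). }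
  split.
  { intros Hmn x Hall.
    assert (P0 := Hall (act 0 0 0 (mkpt ((fun _ => a0) 0) (z1f y 0) (z2f y 0) (z3f y 0)))).
    assert (Hm0 : Mset lam mu nu eps (fun _ => a0) (z1f y) (z2f y) (z3f y)
                  (act 0 0 0 (mkpt ((fun _ => a0) 0) (z1f y 0) (z2f y 0) (z3f y 0)))).
    { exists 0, 0, 0, 0. split. lra. split. unfold inG; ring. reflexivity. }
    specialize (P0 Hm0). unfold act, mkpt, px1 in P0; simpl in P0.
    assert (Hex : exists p1 p2, inG lam mu nu 1 p1 p2).
    { destruct Hmn as [Hm|Hnu].
      - exists (- lam / mu), 0. unfold inG. field. auto.
      - exists 0, (- lam / nu). unfold inG. field. auto. }
    destruct Hex as (p1 & p2 & Hp).
    assert (P1 := Hall (act 1 p1 p2 (mkpt ((fun _ => a0) 0) (z1f y 0) (z2f y 0) (z3f y 0)))).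
    assert (Hm1 : Mset lam mu nu eps (fun _ => a0) (z1f y) (z2f y) (z3f y)
                  (act 1 p1 p2 (mkpt ((fun _ => a0) 0) (z1f y 0) (z2f y 0) (z3f y 0)))).
    { exists 0, 1, p1, p2. split. lra. split. exact Hp. reflexivity. }
    specialize (P1 Hm1). unfold act, mkpt, px1 in P1; simpl in P1. lra. }
  apply (Part2 (- eps) eps (fun _ => a0) (z1f y) (z2f y) (z3f y) Hsol).
Qed.
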